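(* Let $B\in\mathcal O_{\widetilde{\mathfrak a}}$ be a simple $\widetilde{\mathfrak a}$-module. (1) $\mathrm{ord}_{\widetilde{\mathfrak a}}(B)=\mathrm{ord}_{\widetilde{\mathfrak a}}(v)$ for all $0\ne v\in B$, and there exists $(r,s)\in\mathbb Z_+^2$ such that $\mathcal L^{(r,s)}B=0$. (2) If $\mathrm{ord}_{\widetilde{\mathfrak a}}(B)=0$, then $B$ is a simple $\mathfrak a$-module. (3) If $r=\mathrm{ord}_{\widetilde{\mathfrak a}}(B)>0$, then $I_{r-1}$ acts bijectively on $B$.
   Context: In the Lie algebra with basis $\{d_n=t^{n+1}\frac{d}{dt},I_n=t^n\}$ (brackets $[d_n,d_m]=(m-n)d_{m+n}$, $[d_n,I_m]=mI_{m+n}$, $[I_n,I_m]=0$ for the indices used here), let $\mathfrak a=\mathrm{span}\{d_i\mid i\ge0\}$, $\widetilde{\mathfrak a}=\mathrm{span}\{d_i,I_i\mid i\ge0\}$, and $\mathcal L^{(r,s)}=\mathrm{span}\{I_{r+i},d_{s+i}\mid i\ge0\}$. $\mathcal O_{\widetilde{\mathfrak a}}$ is the category of $\widetilde{\mathfrak a}$-modules $V$ such that for each $v\in V$ there is $n>0$ with $d_iv=I_iv=0$ for all $i\ge n$. For $0\ne v\in B$, $\mathrm{ord}_{\widetilde{\mathfrak a}}(v)$ is the minimal $r\in\mathbb Z_+$ with $I_{r+i}v=0$ for all $i\ge0$, and $\mathrm{ord}_{\widetilde{\mathfrak a}}(B)$ is the maximum of the orders of its nonzero elements ($\infty$ if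 it does not exist). *)

(* Defs.v *)
From HB Require Import structures.
From mathcomp Require Import all_boot all_order all_algebra.
Set Implicit Arguments. Unset Strict Implicit. Unset Printing Implicit Defensive.
Import Order.TTheory GRing.Theory Num.Theory.
Local Open Scope ring_scope.

Section Defs.
Variables (K : numClosedFieldType) (V : lmodType K).
Variables (d I : nat -> {linear V -> V}).

(* V is a module over  ã = span{d_i, I_i | i >= 0} via  d_i |-> d i, I_i |-> I i *)
Definition is_at_module : Prop :=
  [/\ forall (n m : nat) (v : V),
        d n (d m v) - d m (d n v) = ((m%:Z - n%:Z)%R)%:~R *: d (m + n)%N v,
      forall (n m : nat) (v : V),
        d n (I m v) - I m (d n v) = m%:R *: I (m + n)%N v
    & forall (n m : nat) (v : V), I n (I m v) = I m (I n v)].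

Definition in_O_at : Prop :=
  forall v : V, exists2 n : nat, (0 < n)%N &
    forall i : nat, (n <= i)%N -> d i v = 0 /\ I i v = 0.

Definition subspace (W : V -> Prop) : Prop :=
  [/\ W 0, (forall x y, W x -> W y -> W (x + y)) & (forall (a : K) x, W x -> W (a *: x))].

Definition a_submodule (W : V -> Prop) : Prop :=
  subspace W /\ forall i x, W x -> W (d i x).

Definition at_submodule (W : V -> Prop) : Prop :=
  a_submodule W /\ forall i x, W x -> W (I i x).

Definition simple_wrt (P : (V -> Prop) -> Prop) : Prop :=
  (exists v : V, v != 0) /\
  forall W, P W -> (forall x, W x -> x = 0) \/ (forall x, W x).

Definition at_simple : Prop := simple_wrt at_submodule.
Definition a_simple : Prop := simple_wrt a_submodule.

Definition kills_from (v : V) (r : nat) : Prop := forall i : nat, I (r + i)%N v = 0.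
Definition is_ord (v : V) (r : nat) : Prop :=
  kills_from v r /\ forall r', kills_from v r' -> (r <= r')%N.

Definition is_ord_module (r : nat) : Prop :=
  (exists2 v : V, v != 0 & is_ord v r) /\
  forall (v : V) (r' : nat), v != 0 -> is_ord v r' -> (r' <= r)%N.

Definition L_kills (r s : nat) : Prop :=
  forall (i : nat) (v : V), I (r + i)%N v = 0 /\ d (s + i)%N v = 0.

End Defs.

(* Main.v *)
Require Import Defs.
From HB Require Import structures.
From mathcomp Require Import all_boot all_order all_algebra.
Import Order.TTheory GRing.Theory Num.Theory.
Local Open Scope ring_scope.

Section L.
Variables (K : numClosedFieldType) (V : lmodType K)
  (d I : nat -> {linear V -> V})
  (Hmod : is_at_module d I) (HO : in_O_at d I) (Hsimple : at_simple d I).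

Lemma IdE n m x : I m (d n x) = d n (I m x) - m%:R *: I (m + n)%N x.
Proof. case: Hmod => _ H _; rewrite -(H n m x); by rewrite opprB addrC subrK. Qed.

Lemma ddE n m x : d n (d m x) = d m (d n x) + ((m%:Z - n%:Z)%R)%:~R *: d (m + n)%N x.
Proof. case: Hmod => H _ _; by rewrite -(H n m x) addrC subrK. Qed.

Lemma dIE n m x : d n (I m x) = I m (d n x) + m%:R *: I (m + n)%N x.
Proof. case: Hmod => _ H _; by rewrite -(H n m x) addrC subrK. Qed.

Lemma IIE n m x : I n (I m x) = I m (I n x).
Proof. by case: Hmod => _ _ H. Qed.

Lemma use_simple (W : V -> Prop) w : at_submodule d I W -> W w -> w != 0 -> forall u, W u.
Proof.
move=> HW Ww nz; case: Hsimple => _ /(_ W HW) [H|//].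
by move: nz; rewrite (H w Ww) eqxx.
Qed.

Lemma kill_all w r : w != 0 -> kills_from I w r -> forall u, kills_from I u r.
Proof.
move=> nz kw; apply: (@use_simple (fun u => kills_from I u r) w) kw nz.
split; [split; [split|]|].
- by move=> i; rewrite linear0.
- by move=> x y kx ky i; rewrite linearD kx ky addr0.
- by move=> a x kx i; rewrite linearZZ kx scaler0.
- by move=> n x kx i; rewrite IdE kx linear0 -addnA kx scaler0 subr0.
- by move=> j x kx i; rewrite IIE kx linear0.
Qed.

Lemma d_kill w s : w != 0 -> (forall i, (s <= i)%N -> d i w = 0) ->
  (forall u, kills_from I u s) -> forall u i, d (s + i)%N u = 0.
Proof.
move=> nz dw ks.
have := @use_simple (fun u => forall i, d (s + i)%N u = 0) w.
apply=> //; last by move=> i; apply: dw; rewrite leq_addr.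
split; [split; [split|]|].
- by move=> i; rewrite linear0.
- by move=> x y kx ky i; rewrite linearD kx ky addr0.
- by move=> a x kx i; rewrite linearZZ kx scaler0.
- move=> n x kx i; rewrite ddE kx linear0 add0r.
  by rewrite [(n + _)%N]addnC -addnA kx scaler0.
- move=> j x kx i; rewrite dIE kx linear0 add0r.
  by rewrite [(j + _)%N]addnC -addnA ks scaler0.
Qed.

Lemma ord_kills r : is_ord_module I r -> forall u, kills_from I u r.
Proof. by case=> -[v nz [kv _]] _; apply: kill_all nz kv. Qed.

End L.

Theorem lemma28 (K : numClosedFieldType) (V : lmodType K)
  (d I : nat -> {linear V -> V})
  (Hmod : is_at_module d I) (HO : in_O_at d I) (Hsimple : at_simple d I) :
  [/\ (exists r : nat, is_ord_module I r /\
         forall v : V, v != 0 -> is_ord I v r)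
      /\ (exists r s : nat, L_kills d I r s),
      is_ord_module I 0 -> a_simple d
    & forall r : nat, (0 < r)%N -> is_ord_module I r -> bijective (I r.-1)].
Proof.
have [[v0 nz0] _] := Hsimple.
have [n0 _ Hn0] := HO v0.
pose P r := [forall j : 'I_n0, (r <= j)%N ==> (I j v0 == 0)].
have PE r : P r <-> kills_from I v0 r.
  split.
  - move=> /forallP Pr i; case: (ltnP (r + i) n0) => h.
      by apply/eqP; have := Pr (Ordinal h); rewrite /= leq_addr.
    by case: (Hn0 _ h).
  - by move=> kr; apply/forallP => j; apply/implyP => /subnKC <-; rewrite kr.
have exP : exists r, P r by exists n0; apply/PE => i; case: (Hn0 (n0 + i)%N (leq_addr _ _)).
pose r0 := ex_minn exP.
have [Pr0 minr0] : P r0 /\ forall r, P r -> (r0 <= r)%N.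
  by rewrite /r0; case: ex_minnP.
have kr0 : kills_from I v0 r0 by apply/PE.
have kall := @kill_all K V d I Hmod Hsimple _ _ nz0 kr0.
have ord0 : is_ord I v0 r0 by split=> // r' /PE; apply: minr0.
have ordall v : v != 0 -> is_ord I v r0.
  move=> nz; split; first by apply: kall.
  by move=> r' kv; apply: minr0; apply/PE; apply: (@kill_all K V d I Hmod Hsimple _ _ nz kv).
split.
- split.
    exists r0; split=> //; split; first by exists v0.
    by move=> v r' nz [kv mv]; apply: mv; apply: kall.
  exists (maxn r0 n0), (maxn r0 n0) => i v.
  have ks : forall u, kills_from I u (maxn r0 n0).
    by move=> u j; rewrite -(subnKC (leq_maxl r0 n0)) -addnA kall.
  split; first by apply: ks.
  apply: (@d_kill K V d I Hmod Hsimple _ _ nz0) => // j hj.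
  by case: (Hn0 j (leq_trans (leq_maxr _ _) hj)).
- move=> /(@ord_kills K V d I Hmod Hsimple 0) k0; split; first by exists v0.
  move=> W [HW Hd]; case: Hsimple => _; apply; split=> // i x _.
  by case: HW => W0 _ _; rewrite -[i]add0n k0.
- move=> r r0pos Hr.
  have kr := @ord_kills K V d I Hmod Hsimple r Hr.
  have [[v nz [_ mv]] _] := Hr.
  have Ibig n x : (0 < n)%N -> I (r.-1 + n)%N x = 0.
    by move=> np; rewrite -(prednK np) addnS -addSn (prednK r0pos) kr.
  have inj0 : forall x, I r.-1 x = 0 -> x = 0.
    move=> x Ix; apply/eqP; apply/negPn/negP => nzx.
    have := @use_simple K V d I Hsimple (fun u => I r.-1 u = 0) x _ Ix nzx.
    have Hsub : at_submodule d I (fun u => I r.-1 u = 0).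
      split; [split; [split|]|].
      - by rewrite linear0.
      - by move=> a b ha hb; rewrite linearD ha hb addr0.
      - by move=> a b hb; rewrite linearZZ hb scaler0.
      - move=> n y hy; rewrite (@IdE K V d I Hmod) hy linear0 sub0r.
        case: n => [|n]; first by rewrite addn0 hy scaler0 oppr0.
        by rewrite Ibig // scaler0 oppr0.
      - by move=> j y hy; rewrite (@IIE K V d I Hmod) hy linear0.
    move=> /(_ Hsub) all0.
    have : (r <= r.-1)%N.
      apply: mv => i; case: i => [|i]; first by rewrite addn0 all0.
      by rewrite addnS -addSn (prednK r0pos) kr.
    by rewrite -{1}(prednK r0pos) ltnn.
  have inj : injective (I r.-1).
    by move=> x y e; apply/eqP; rewrite -subr_eq0; apply/eqP/inj0; rewrite linearB e subrr.
  have Hsub : at_submodule d I (fun u => exists x, u = I r.-1 x).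
    split; [split; [split|]|].
    - by exists 0; rewrite linear0.
    - by move=> a b [x ->] [y ->]; exists (x + y); rewrite linearD.
    - by move=> a b [x ->]; exists (a *: x); rewrite linearZZ.
    - move=> n y [x ->]; rewrite (@dIE K V d I Hmod).
      case: n => [|n]; first by exists (d 0 x + r.-1%:R *: x); rewrite addn0 linearD linearZZ.
      by exists (d n.+1 x); rewrite Ibig // scaler0 addr0.
    - by move=> j y [x ->]; exists (I j x); rewrite (@IIE K V d I Hmod).
  have vnz : I r.-1 v != 0 by apply/negP => /eqP /inj0 v0'; move: nz; rewrite v0' eqxx.
  have surj := @use_simple K V d I Hsimple _ _ Hsub (ex_intro _ v erefl) vnz.
  have surjb y : exists x, I r.-1 x == y by have [x ->] := surj y; exists x.
  exists (fun y => xchoose (surjb y)).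
  + by move=> x; apply: inj; apply/eqP; apply: (xchooseP (surjb (I r.-1 x))).
  + by move=> y; apply/eqP; apply: (xchooseP (surjb y)).
Qed.
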